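(* Let $\mathcal{U}$ be a uniformity on a set $G$ generating the topology $\tau_{\mathcal{U}}$, and assume the topological space $(G,\tau_{\mathcal{U}})$ has the Hurewicz property. Then $(G,\tau_{\mathcal{U}})$ satisfies ${\sf S}_c(\mathcal{O}_{\mathcal{U}},\mathcal{O})$ if and only if it satisfies ${\sf S}_c(\mathcal{O},\mathcal{O})$.
   Context: For $V\subseteq G\times G$ and $x\in G$, $V(x)=\{y\in G:(x,y)\in V\}$. $\mathcal{O}_{\mathcal{U}}=\{\{V(x):x\in G\}: V\in\mathcal{U}\}$ is the collection of uniform covers (with respect to $\mathcal{U}$). $\mathcal{O}$ is the collection of all open covers of $(G,\tau_{\mathcal{U}})$. A family $\mathcal{B}$ refines $\mathcal{A}$ if every member of $\mathcal{B}$ is contained in some member of $\mathcal{A}$. ${\sf S}_c(\mathcal{A},\mathcal{B})$: for each sequence $(A_n:n<\infty)$ of elements of $\mathcal{A}$ there is a sequence $(B_n:n<\infty)$ such that each $B_n$ is a pairwise disjoint family of open sets refining $A_n$ and $\bigcup_nB_n\in\mathcal{B}$. A space $X$ has the Hurewicz property if for each sequence $(\mathcal{U}_n:n<\infty)$ of open covers of $X$ there are finite $\mathcal{F}_n\subseteq\mathcal{U}_n$ such that for each $x\in X$ the set $\{n:x\notin\bigcup\mathcal{F}_n\}$ is finite. *)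

(* Defs.v *)
From Stdlib Require Import List.

Definition set (G : Type) := G -> Prop.
Definition rel (G : Type) := G -> G -> Prop.

Definition section {G : Type} (V : rel G) (x : G) : set G := fun y => V x y.

Definition uniformity {G : Type} (U : rel G -> Prop) : Prop :=
  (exists V, U V) /\
  (forall V, U V -> forall x, V x x) /\
  (forall V W, U V -> (forall x y, V x y -> W x y) -> U W) /\
  (forall V W, U V -> U W -> U (fun x y => V x y /\ W x y)) /\
  (forall V, U V -> U (fun x y => V y x)) /\
  (forall V, U V -> exists W, U W /\
       (forall x y z, W x y -> W y z -> V x z)).

Definition uopen {G : Type} (U : rel G -> Prop) (O : set G) : Prop :=
  forall x, O x -> exists V, U V /\ (forall y, V x y -> O y).

Definition open_cover {G : Type} (opn : set G -> Prop) (A : set G -> Prop) : Prop :=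
  (forall s, A s -> opn s) /\ (forall x, exists s, A s /\ s x).

Definition uniform_cover {G : Type} (U : rel G -> Prop) (A : set G -> Prop) : Prop :=
  exists V, U V /\ (forall s, A s <-> exists x, s = section V x).

Definition refines {G : Type} (B A : set G -> Prop) : Prop :=
  forall s, B s -> exists t, A t /\ (forall x, s x -> t x).

Definition pairwise_disjoint {G : Type} (B : set G -> Prop) : Prop :=
  forall s t, B s -> B t -> s <> t -> forall x, ~ (s x /\ t x).

Definition Sc {G : Type} (opn : set G -> Prop)
    (AA BB : (set G -> Prop) -> Prop) : Prop :=
  forall A : nat -> (set G -> Prop), (forall n, AA (A n)) ->
  exists B : nat -> (set G -> Prop),
    (forall n, (forall s, B n s -> opn s) /\ pairwise_disjoint (B n)
               /\ refines (B n) (A n)) /\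
    BB (fun s => exists n, B n s).

Definition hurewicz {G : Type} (opn : set G -> Prop) : Prop :=
  forall Uc : nat -> (set G -> Prop), (forall n, open_cover opn (Uc n)) ->
  exists F : nat -> list (set G),
    (forall n s, In s (F n) -> Uc n s) /\
    (forall x, exists N, forall n, N <= n -> exists s, In s (F n) /\ s x).

(* Main.v *)
Require Import Defs.
From Stdlib Require Import List Arith Lia Cantor ClassicalEpsilon.

Lemma choice_fun {A B : Type} (R : A -> B -> Prop) :
  (forall a, exists b, R a b) -> exists f : A -> B, forall a, R a (f a).
Proof.
  intros H. exists (fun a => proj1_sig (constructive_indefinite_description _ (H a))).
  intros a. exact (proj2_sig (constructive_indefinite_description _ (H a))).
Qed.

Definition uint {G : Type} (U : rel G -> Prop) (S : set G) : set G :=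
  fun z => exists W, U W /\ (forall w, W z w -> S w).

Lemma uint_open {G : Type} (U : rel G -> Prop) (S : set G) :
  uniformity U -> uopen U (uint U S).
Proof.
  intros (_ & Hrefl & _ & _ & _ & Hhalf) z [W [HW HS]].
  destruct (Hhalf W HW) as [W1 [HW1 Hc]].
  exists W1. split; auto. intros y Hy. exists W1. split; auto.
  intros w Hw. apply HS. eapply Hc; eauto.
Qed.

Lemma uint_sub {G : Type} (U : rel G -> Prop) (S : set G) z :
  uniformity U -> uint U S z -> S z.
Proof.
  intros (_ & Hrefl & _) [W [HW HS]]. apply HS, Hrefl, HW.
Qed.

Lemma list_pts {G : Type} (P : G -> set G -> Prop) (l : list (set G)) :
  (forall s, In s l -> exists x, P x s) ->
  exists lx : list G, forall s, In s l -> exists x, In x lx /\ P x s.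
Proof.
  induction l as [|s l IH]; intros H.
  - exists nil. intros s [].
  - destruct IH as [lx Hlx]. { intros t Ht. apply H. right; exact Ht. }
    destruct (H s (or_introl eq_refl)) as [x Hx].
    exists (x :: lx). intros t [<-|Ht].
    + exists x. split; [left; reflexivity|exact Hx].
    + destruct (Hlx t Ht) as [y [Hy1 Hy2]]. exists y. split; [right; exact Hy1|exact Hy2].
Qed.

Lemma inter_list {G : Type} (U : rel G -> Prop) (W : G -> rel G) (l : list G) :
  uniformity U -> (forall x, U (W x)) ->
  U (fun a b => forall x, In x l -> W x a b /\ W x b a).
Proof.
  intros HU HW. pose proof HU as (Hne & Hrefl & Hup & Hint & Hsym & _).
  induction l as [|x l IH].
  - destruct Hne as [V HV]. eapply Hup; [exact HV|]. intros a b _ x [].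
  - assert (H2 : U (fun a b => (W x a b /\ W x b a) /\
                      (forall y, In y l -> W y a b /\ W y b a))).
    { apply Hint; auto. }
    eapply Hup; [exact H2|]. intros a b [H1 H3] y [<-|Hy]; auto.
Qed.

Theorem theorem5p1 (G : Type) (U : rel G -> Prop) :
  uniformity U -> hurewicz (uopen U) ->
  (Sc (uopen U) (uniform_cover U) (open_cover (uopen U)) <->
   Sc (uopen U) (open_cover (uopen U)) (open_cover (uopen U))).
Proof.
  intros HU Hh. pose proof HU as (Hne & Hrefl & Hup & Hint & Hsym & Hhalf).
  apply iff_sym; split.
  - intros HS A HA.
    destruct (choice_fun (fun n V => U V /\ forall s, A n s <-> exists x, s = section V x) HA)
      as [V HV].
    set (A' := fun n (s : set G) => exists x, s = uint U (section (V n) x)).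
    assert (HA' : forall n, open_cover (uopen U) (A' n)).
    { intros n. split.
      - intros s [x ->]. apply uint_open; auto.
      - intros z. exists (uint U (section (V n) z)). split; [exists z; reflexivity|].
        exists (V n). split; [apply HV|]. intros w Hw; exact Hw. }
    destruct (HS A' HA') as [B [HB Hcov]]. exists B. split; [|exact Hcov].
    intros n. destruct (HB n) as (H1 & H2 & H3). split; [auto|split; [auto|]].
    intros s Hs. destruct (H3 s Hs) as [t [[x ->] Ht]].
    exists (section (V n) x). split.
    + apply (proj2 (HV n)). exists x; reflexivity.
    + intros y Hy. apply (uint_sub U); auto.
  - intros HS A HA.
    assert (Hstep : forall p : nat * G, exists Wa : rel G * set G,
               U (fst Wa) /\ A (fst p) (snd Wa) /\
               forall z y w, fst Wa (snd p) z -> fst Wa z y -> fst Wa y w -> snd Wa w).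
    { intros [n x]. destruct (proj2 (HA n) x) as [s [Hs Hx]].
      destruct (proj1 (HA n) s Hs x Hx) as [V0 [HV0 HV0s]].
      destruct (Hhalf V0 HV0) as [W1 [HW1 Hc1]].
      destruct (Hhalf W1 HW1) as [W2 [HW2 Hc2]].
      exists (W2, s). simpl. split; [exact HW2|split; [exact Hs|]].
      intros z y w H1 H2 H3. apply HV0s. eapply Hc1.
      - eapply Hc2; eauto.
      - eapply Hc2; [exact H3| apply Hrefl; exact HW2]. }
    destruct (choice_fun _ Hstep) as [f Hf].
    set (W := fun n x => fst (f (n, x))). set (a := fun n x => snd (f (n, x))).
    assert (HW : forall n x, U (W n x)) by (intros n x; apply (Hf (n, x))).
    assert (Ha : forall n x, A n (a n x)) by (intros n x; apply (Hf (n, x))).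
    assert (Hch : forall n x z y w, W n x x z -> W n x z y -> W n x y w -> a n x w)
      by (intros n x; apply (Hf (n, x))).
    set (Hc := fun n (s : set G) => exists x, s = uint U (section (W n x) x)).
    assert (HHc : forall n, open_cover (uopen U) (Hc n)).
    { intros n. split.
      - intros s [x ->]. apply uint_open; auto.
      - intros z. exists (uint U (section (W n z) z)). split; [exists z; reflexivity|].
        exists (W n z). split; auto. }
    destruct (Hh Hc HHc) as [F [HF1 HF2]].
    assert (HL : forall n, exists lx : list G, forall s, In s (F n) ->
                   exists x, In x lx /\ s = uint U (section (W n x) x)).
    { intros n. apply list_pts. intros s Hs. apply (HF1 n s Hs). }
    destruct (choice_fun _ HL) as [L HL'].
    assert (HLcov : forall z, exists N, forall n, N <= n ->
                      exists x, In x (L n) /\ W n x x z).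
    { intros z. destruct (HF2 z) as [N HN]. exists N. intros n Hn.
      destruct (HN n Hn) as [s [Hs Hz]]. destruct (HL' n s Hs) as [x [Hx ->]].
      exists x. split; auto. apply (uint_sub U) in Hz; auto. }
    set (E := fun n a b => forall x, In x (L n) -> W n x a b /\ W n x b a).
    assert (HE : forall n, U (E n)) by (intros n; apply inter_list; auto).
    assert (Hk : forall k, exists Bk : nat -> (set G -> Prop),
      (forall j, (forall s, Bk j s -> uopen U s) /\ pairwise_disjoint (Bk j)
               /\ refines (Bk j) (fun s => exists y, s = section (E (to_nat (k, j))) y)) /\
      open_cover (uopen U) (fun s => exists j, Bk j s)).
    { intros k. apply HS. intros j. exists (E (to_nat (k, j))). split; auto.
      intros s; split; auto. }
    destruct (choice_fun _ Hk) as [BB HBB].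
    set (B := fun n (s : set G) => BB (fst (of_nat n)) (snd (of_nat n)) s /\
              exists z, s z /\ exists x, In x (L n) /\ W n x x z).
    exists B. split.
    + intros n. destruct (HBB (fst (of_nat n))) as [HB1 _].
      destruct (HB1 (snd (of_nat n))) as (H1 & H2 & H3).
      split; [intros s [Hs _]; auto|split].
      * intros s t [Hs _] [Ht _]. apply H2; auto.
      * intros s [Hs [z [Hz [x [Hx Hxz]]]]].
        destruct (H3 s Hs) as [t [[y ->] Hst]].
        rewrite <- surjective_pairing, cancel_to_of in Hst.
        exists (a n x). split; auto. intros w Hw.
        apply (Hch n x z y w Hxz).
        -- apply (Hst z Hz x Hx).
        -- apply (Hst w Hw x Hx).
    + split.
      * intros s [n [Hs _]]. destruct (HBB (fst (of_nat n))) as [HB1 _].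
        apply (HB1 (snd (of_nat n))); auto.
      * intros z. destruct (HLcov z) as [N HN].
        destruct (HBB N) as [_ [_ Hc2]]. destruct (Hc2 z) as [s [[j Hs] Hz]].
        exists s. split; auto. exists (to_nat (N, j)). unfold B.
        rewrite cancel_of_to. simpl. split; auto.
        exists z. split; auto. apply HN.
        pose proof (to_nat_non_decreasing N j). simpl in H. lia.
Qed.
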